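(* The cardinality $|\mathcal{D}|$ of the collection of drawable sets is strictly less than the cardinality of the collection of convex subsets of $\mathbb{R}^2$. In particular, not every convex subset of $\mathbb{R}^2$ is drawable (indeed most are not).
   Context: For $A\subseteq\mathbb{R}^2$ let $N(A)=\{x\in\mathbb{R}^2: |x-a|<1 \text{ for some } a\in A\}$. Let $\mathcal{D}_1=\{N(A_1): A_1\subseteq\mathbb{R}^2\}$ and for $n\ge 2$ let $\mathcal{D}_n=\{D\cup N(A_n): D\in\mathcal{D}_{n-1}, A_n\subseteq\mathbb{R}^2\}$ if $n$ is odd and $\mathcal{D}_n=\{D\setminus N(A_n): D\in\mathcal{D}_{n-1}, A_n\subseteq\mathbb{R}^2\}$ if $n$ is even. A set is drawable if it lies in $\mathcal{D}=\bigcup_{n\ge1}\mathcal{D}_n$. *)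

(* Defs.v *)
From Stdlib Require Import Reals.
Open Scope R_scope.

Definition point := (R * R)%type.
Definition pset := point -> Prop.

Definition dist2 (x y : point) : R :=
  sqrt ((fst x - fst y) ^ 2 + (snd x - snd y) ^ 2).

Definition Nbhd (A : pset) : pset :=
  fun x => exists a, A a /\ dist2 x a < 1.

(* Dlev k = D_(k+1).  D_1 = { N(A_1) };
   D_n = { D u N(A_n) } for n odd, { D \ N(A_n) } for n even (n >= 2). *)
Fixpoint Dlev (k : nat) : pset -> Prop :=
  match k with
  | O => fun S => exists A1 : pset, S = Nbhd A1
  | S k' => fun S =>
      exists (D : pset) (A : pset), Dlev k' D /\
        (* n = k' + 2 ; n odd iff k' odd *)
        S = (if Nat.odd k' then (fun x => D x \/ Nbhd A x)
                           else (fun x => D x /\ ~ Nbhd A x))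
  end.

Definition drawable (S : pset) : Prop := exists k, Dlev k S.

Definition convex (C : pset) : Prop :=
  forall x y : point, forall t : R, C x -> C y -> 0 <= t <= 1 ->
    C (t * fst x + (1 - t) * fst y, t * snd x + (1 - t) * snd y).

Definition injective {A B : Type} (f : A -> B) : Prop :=
  forall a1 a2, f a1 = f a2 -> a1 = a2.

Definition card_lt (A B : Type) : Prop :=
  (exists f : A -> B, injective f) /\ ~ (exists g : B -> A, injective g).

(* Main.v *)
Require Import Defs.
From Stdlib Require Import Reals Lra Lia Cantor ClassicalEpsilon ProofIrrelevance Rgeom
  FunctionalExtensionality PropExtensionality Classical ZArith.
Open Scope R_scope.

Definition term (s : nat -> Prop) (k : nat) : R :=
  if excluded_middle_informative (s k) then (/3) ^ (S k) else 0.

Fixpoint Ps (s : nat -> Prop) (n : nat) : R :=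
  match n with O => 0 | S n' => Ps s n' + term s n' end.

Lemma term_bounds s k : 0 <= term s k <= (/3) ^ (S k).
Proof.
  unfold term; destruct excluded_middle_informative.
  - split; [|lra]. left; apply pow_lt; lra.
  - split; [lra|]. left; apply pow_lt; lra.
Qed.

Lemma Ps_tail s j l : Ps s (j + l) - Ps s j <= (/3) ^ j / 2 * (1 - (/3) ^ l).
Proof.
  induction l.
  - rewrite Nat.add_0_r; simpl; lra.
  - rewrite Nat.add_succ_r; simpl Ps.
    pose proof (term_bounds s (j + l)) as [_ H].
    rewrite <- Nat.add_succ_r, pow_add in H. simpl in H |- *.
    assert (0 < (/3)^j) by (apply pow_lt; lra).
    assert (0 < (/3)^l) by (apply pow_lt; lra).
    nra.
Qed.

Lemma Ps_mono s j l : Ps s j <= Ps s (j + l).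
Proof.
  induction l.
  - rewrite Nat.add_0_r; lra.
  - rewrite Nat.add_succ_r; simpl. pose proof (term_bounds s (j + l)); lra.
Qed.

Lemma Ps_bound s n : Ps s n <= /2.
Proof.
  pose proof (Ps_tail s 0 n). simpl in H.
  assert (0 < (/3)^n) by (apply pow_lt; lra). lra.
Qed.

Lemma Ps_bnd s : bound (fun x => exists n, x = Ps s n).
Proof. exists (/2). intros x [n ->]. apply Ps_bound. Qed.
Lemma Ps_ne s : exists x, (fun x => exists n, x = Ps s n) x.
Proof. exists 0, O. reflexivity. Qed.

Definition f3 (s : nat -> Prop) : R :=
  proj1_sig (completeness _ (Ps_bnd s) (Ps_ne s)).

Lemma f3_lub s : is_lub (fun x => exists n, x = Ps s n) (f3 s).
Proof. unfold f3. destruct completeness; simpl; auto. Qed.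

Lemma least_ex (Q : nat -> Prop) : (exists n, Q n) -> exists n, Q n /\ forall k, (k < n)%nat -> ~ Q k.
Proof.
  intros [n Hn]. revert Hn. induction n as [n IH] using (well_founded_induction Wf_nat.lt_wf).
  intros Hn. destruct (classic (exists k, (k < n)%nat /\ Q k)) as [[k [Hk Qk]]|N].
  - exact (IH k Hk Qk).
  - exists n; split; auto. intros k Hk Qk; apply N; eauto.
Qed.

Lemma term_eq s t k : (s k <-> t k) -> term s k = term t k.
Proof.
  intros H; unfold term; do 2 destruct excluded_middle_informative; tauto.
Qed.

Lemma Ps_agree s t m : (forall k, (k < m)%nat -> (s k <-> t k)) -> Ps s m = Ps t m.
Proof.
  induction m; intros H; simpl; auto.
  rewrite IHm by (intros; apply H; lia). rewrite (term_eq s t m) by (apply H; lia). auto.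
Qed.

Lemma f3_lt s t m : (forall k, (k < m)%nat -> (s k <-> t k)) -> s m -> ~ t m -> f3 t < f3 s.
Proof.
  intros Hag Hs Ht.
  pose proof (f3_lub s) as [Us _]. pose proof (f3_lub t) as [_ Lt].
  assert (Hsm : Ps s (S m) = Ps s m + (/3)^(S m)).
  { simpl Ps. unfold term. destruct excluded_middle_informative; [|tauto]. reflexivity. }
  assert (H1 : Ps s (S m) <= f3 s) by (apply Us; eauto).
  assert (Hpos : 0 < (/3)^m) by (apply pow_lt; lra).
  assert (H2 : f3 t <= Ps s m + (/3)^(S m) / 2).
  { apply Lt. intros x [n ->].
    destruct (Compare_dec.le_lt_dec n m) as [Hn|Hn].
    - pose proof (Ps_mono t n (m - n)).
      replace (n + (m - n))%nat with m in * by lia. rewrite (Ps_agree s t m Hag).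
      simpl. lra.
    - pose proof (Ps_tail t (S m) (n - S m)). replace (S m + (n - S m))%nat with n in H by lia.
      assert (Ps t (S m) = Ps s m).
      { simpl. rewrite (Ps_agree s t m Hag). unfold term.
        destruct excluded_middle_informative; [tauto|]. lra. }
      assert (0 < (/3)^(n - S m)) by (apply pow_lt; lra). simpl in *. nra. }
  simpl in *. lra.
Qed.

Lemma f3_inj : injective f3.
Proof.
  intros s t E. apply NNPP; intros Hne.
  assert (exists k, ~ (s k <-> t k)).
  { apply NNPP; intros N; apply Hne. extensionality k. apply propositional_extensionality.
    apply NNPP; intros N'; apply N; eauto. }
  destruct (least_ex _ H) as [m [Hm Hmin]].
  assert (Hag : forall k, (k < m)%nat -> (s k <-> t k)).
  { intros k Hk. apply NNPP; intros N; exact (Hmin k Hk N). }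
  destruct (classic (s m)) as [Sm|Sm].
  - assert (~ t m) by tauto. pose proof (f3_lt s t m Hag Sm H0); lra.
  - assert (t m) by tauto.
    assert (Hag' : forall k, (k < m)%nat -> (t k <-> s k)) by (intros k Hk; specialize (Hag k Hk); tauto).
    pose proof (f3_lt t s m Hag' H0 Sm); lra.
Qed.

Definition rad (n : nat) : R := (/2) ^ n.
Definition Box (q : Z * Z * nat) : pset :=
  fun y => let '(a, b, n) := q in
    Rabs (fst y - IZR a * rad n) < rad n /\ Rabs (snd y - IZR b * rad n) < rad n.

Definition opn (U : pset) : Prop :=
  forall x, U x -> exists q, Box q x /\ forall y, Box q y -> U y.

Definition code (U : pset) : Z * Z * nat -> Prop := fun q => forall y, Box q y -> U y.
Definition recon (c : Z * Z * nat -> Prop) : pset := fun y => exists q, c q /\ Box q y.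

Lemma recon_code U : opn U -> recon (code U) = U.
Proof.
  intros HU. extensionality y. apply propositional_extensionality. split.
  - intros [q [Hc Hb]]. exact (Hc y Hb).
  - intros Hy. destruct (HU y Hy) as [q [Hb Hc]]. exists q; split; auto.
Qed.

Lemma approx (x r : R) : 0 < r -> exists a : Z, Rabs (x - IZR a * r) < r.
Proof.
  intros Hr. destruct (archimed (x / r)) as [H1 H2].
  exists (up (x / r) - 1)%Z. rewrite minus_IZR.
  set (u := IZR (up (x / r))) in *.
  assert (x = (x / r) * r) by (field; lra).
  set (v := x / r) in *.
  apply Rabs_def1; nra.
Qed.

Lemma box_small x d : 0 < d -> exists q, Box q x /\ forall y, Box q y -> dist2 y x < d.
Proof.
  intros Hd.
  destruct (pow_lt_1_zero (/2) ltac:(rewrite Rabs_right; lra) (d / 3) ltac:(lra)) as [N HN].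
  specialize (HN N (le_n N)). rewrite Rabs_right in HN by (left; apply pow_lt; lra).
  assert (Hr : 0 < rad N) by (apply pow_lt; lra).
  fold (rad N) in HN.
  destruct (approx (fst x) (rad N) Hr) as [a Ha].
  destruct (approx (snd x) (rad N) Hr) as [b Hb].
  exists (a, b, N). split. { simpl; auto. }
  intros y [Hya Hyb].
  apply Rabs_def2 in Ha, Hb, Hya, Hyb.
  unfold dist2.
  set (u := (fst y - fst x) ^ 2 + (snd y - snd x) ^ 2).
  assert (Hu : 0 <= u) by (unfold u; pose proof (pow2_ge_0 (fst y - fst x)); pose proof (pow2_ge_0 (snd y - snd x)); lra).
  set (r := rad N) in *.
  assert (E1 : (fst y - fst x) ^ 2 <= 4 * (r * r)) by (simpl; nra).
  assert (E2 : (snd y - snd x) ^ 2 <= 4 * (r * r)) by (simpl; nra).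
  assert (E3 : 9 * (r * r) < d * d) by nra.
  assert (Hu2 : u < d * d) by (unfold u; nra).
  pose proof (sqrt_sqrt u Hu). pose proof (sqrt_pos u).
  nra.
Qed.

Lemma dist2_euc x y : dist2 x y = dist_euc (fst x) (snd x) (fst y) (snd y).
Proof. unfold dist2, dist_euc. rewrite !Rsqr_pow2. reflexivity. Qed.

Lemma Nbhd_opn A : opn (Nbhd A).
Proof.
  intros x [a [Ha Hxa]].
  destruct (box_small x (1 - dist2 x a) ltac:(lra)) as [q [Hq Hs]].
  exists q; split; auto. intros y Hy. exists a; split; auto.
  pose proof (Hs y Hy). rewrite dist2_euc in *.
  pose proof (triangle (fst y) (snd y) (fst a) (snd a) (fst x) (snd x)).
  rewrite dist2_euc in *. lra.
Qed.

Fixpoint build (k : nat) (Us : nat -> pset) : pset :=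
  match k with
  | O => Us O
  | S k' => let D := build k' (fun i => Us (S i)) in
      if Nat.odd k' then fun x => D x \/ Us O x else fun x => D x /\ ~ Us O x
  end.

Lemma Dlev_build k : forall S, Dlev k S -> exists Us, (forall i, opn (Us i)) /\ S = build k Us.
Proof.
  induction k; intros S H.
  - destruct H as [A ->]. exists (fun _ => Nbhd A). split; auto. intros; apply Nbhd_opn.
  - destruct H as [D [A [HD ->]]]. destruct (IHk D HD) as [Us [Ho ->]].
    exists (fun i => match i with O => Nbhd A | S i => Us i end). split.
    + intros [|i]; auto. apply Nbhd_opn.
    + reflexivity.
Qed.

Definition K := (nat * (nat -> Z * Z * nat -> Prop))%type.
Definition decode (c : K) : pset := build (fst c) (fun i => recon (snd c i)).

Lemma drawable_decode S : drawable S -> exists c, decode c = S.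
Proof.
  intros [k H]. destruct (Dlev_build k S H) as [Us [Ho ->]].
  exists (k, fun i => code (Us i)). unfold decode; simpl. f_equal.
  extensionality i. apply recon_code, Ho.
Qed.

Definition enc (S : {S : pset | drawable S}) : K :=
  proj1_sig (constructive_indefinite_description _ (drawable_decode _ (proj2_sig S))).

Lemma enc_inj : injective enc.
Proof.
  intros [S1 H1] [S2 H2] E. unfold enc in E; simpl in E.
  destruct constructive_indefinite_description as [c1 e1];
  destruct constructive_indefinite_description as [c2 e2]; simpl in E. subst.
  apply subset_eq_compat. reflexivity.
Qed.

Definition T := (nat + (nat * (Z * Z * nat)))%type.
Definition kc (c : K) : T -> Prop := fun t =>
  match t with inl j => j = fst c | inr (i, q) => snd c i q end.

Lemma kc_inj : injective kc.
Proof.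
  intros [k1 c1] [k2 c2] E. simpl in *.
  assert (k1 = k2).
  { pose proof (equal_f E (inl k1)). simpl in H. rewrite <- H. reflexivity. }
  subst. f_equal. extensionality i. extensionality q.
  exact (equal_f E (inr (i, q))).
Qed.

Definition zn (z : Z) : nat := Z.to_nat (if Z.leb 0 z then 2 * z else -2 * z - 1)%Z.
Lemma zn_inj : injective zn.
Proof.
  intros z1 z2. unfold zn.
  destruct (Z.leb_spec 0 z1); destruct (Z.leb_spec 0 z2); lia.
Qed.

Definition iota (t : T) : nat :=
  match t with
  | inl j => 2 * j
  | inr (i, (a, b, n)) => S (2 * to_nat (i, to_nat (zn a, to_nat (zn b, n))))
  end%nat.

Lemma to_nat_inj p q : to_nat p = to_nat q -> p = q.
Proof. intros H. rewrite <- (cancel_of_to p), <- (cancel_of_to q), H. reflexivity. Qed.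

Lemma iota_inj : injective iota.
Proof.
  intros [j1|[i1 [[a1 b1] n1]]] [j2|[i2 [[a2 b2] n2]]]; unfold iota; intros H.
  - f_equal; lia.
  - lia.
  - lia.
  - assert (H' : to_nat (i1, to_nat (zn a1, to_nat (zn b1, n1))) =
                 to_nat (i2, to_nat (zn a2, to_nat (zn b2, n2)))) by lia.
    apply to_nat_inj in H'. apply pair_equal_spec in H' as [-> H'].
    apply to_nat_inj in H'. apply pair_equal_spec in H' as [H1 H'].
    apply to_nat_inj in H'. apply pair_equal_spec in H' as [H2 ->].
    apply zn_inj in H1, H2. subst. reflexivity.
Qed.

Definition conv (P : R -> Prop) : pset :=
  fun p => snd p > fst p ^ 2 \/ (snd p = fst p ^ 2 /\ P (fst p)).

Lemma conv_convex P : convex (conv P).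
Proof.
  intros [a b] [c d] t Hx Hy Ht. unfold conv in *; simpl in *.
  assert (Hb : b >= a ^ 2) by (destruct Hx as [H|[H _]]; lra).
  assert (Hd : d >= c ^ 2) by (destruct Hy as [H|[H _]]; lra).
  destruct (Rlt_or_le ((t * a + (1 - t) * c) ^ 2) (t * b + (1 - t) * d)) as [Hl|Hl]; [left; lra|].
  assert (Id : (t * b + (1 - t) * d) - (t * a + (1 - t) * c) ^ 2 =
     t * (b - a ^ 2) + (1 - t) * (d - c ^ 2) + t * (1 - t) * ((a - c) * (a - c))) by (simpl; ring).
  assert (h1 : t * (b - a ^ 2) >= 0) by nra.
  assert (h2 : (1 - t) * (d - c ^ 2) >= 0) by nra.
  assert (h3 : t * (1 - t) * ((a - c) * (a - c)) >= 0).
  { pose proof (Rle_0_sqr (a - c)); unfold Rsqr in *. apply Rle_ge, Rmult_le_pos; [nra | lra]. }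
  assert (z1 : t * (b - a ^ 2) = 0) by lra.
  assert (z2 : (1 - t) * (d - c ^ 2) = 0) by lra.
  assert (z3 : t * (1 - t) * ((a - c) * (a - c)) = 0) by lra.
  destruct (Req_dec t 0) as [->|H0].
  { replace (0 * a + (1 - 0) * c) with c by ring. replace (0 * b + (1 - 0) * d) with d by ring. auto. }
  destruct (Req_dec t 1) as [->|H1].
  { replace (1 * a + (1 - 1) * c) with a by ring. replace (1 * b + (1 - 1) * d) with b by ring. auto. }
  assert (e3 : (a - c) * (a - c) = 0).
  { apply Rmult_integral in z3 as [z3|z3]; auto. apply Rmult_integral in z3 as [z3|z3]; lra. }
  assert (a = c) by nra. subst c.
  assert (b = a ^ 2).
  { apply Rmult_integral in z1 as [z1|z1]; lra. }
  subst b.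
  replace (t * a + (1 - t) * a) with a by ring.
  destruct Hx as [Hx|Hx]; [lra|].
  right. split; [|tauto].
  assert (d = a ^ 2).
  { apply Rmult_integral in z2 as [z2|z2]; lra. }
  subst d. ring.
Qed.

Definition convS (P : R -> Prop) : {C : pset | convex C} := exist _ (conv P) (conv_convex P).

Lemma convS_inj : injective convS.
Proof.
  intros P Q E. apply (f_equal (@proj1_sig _ _)) in E. simpl in E.
  extensionality r. apply propositional_extensionality.
  pose proof (equal_f E (r, r ^ 2)). unfold conv in H; cbn [fst snd] in H.
  split; intros Hr.
  - assert (r ^ 2 > r ^ 2 \/ r ^ 2 = r ^ 2 /\ Q r) by (rewrite <- H; auto).
    destruct H0; [lra | tauto].
  - assert (r ^ 2 > r ^ 2 \/ r ^ 2 = r ^ 2 /\ P r) by (rewrite H; auto).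
    destruct H0; [lra | tauto].
Qed.

Definition Fd (S : {S : pset | drawable S}) : R :=
  f3 (fun m => exists t, iota t = m /\ kc (enc S) t).

Lemma Fd_inj : injective Fd.
Proof.
  intros S1 S2 E. apply f3_inj in E. apply enc_inj, kc_inj.
  extensionality t. apply propositional_extensionality.
  pose proof (equal_f E (iota t)). simpl in H. split; intros Ht.
  - assert (exists t', iota t' = iota t /\ kc (enc S2) t') as [t' [e Ht']] by (rewrite <- H; eauto).
    apply iota_inj in e; subst; auto.
  - assert (exists t', iota t' = iota t /\ kc (enc S1) t') as [t' [e Ht']] by (rewrite H; eauto).
    apply iota_inj in e; subst; auto.
Qed.

Lemma cantor_R (h : (R -> Prop) -> R) : ~ injective h.
Proof.
  intros Hh. set (P := fun r => exists Q, h Q = r /\ ~ Q r).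
  destruct (classic (P (h P))) as [HP|HP].
  - pose proof HP as HP'. destruct HP' as [Q [e NQ]]. apply Hh in e. rewrite e in NQ. tauto.
  - apply HP. exists P; split; auto.
Qed.

Lemma no_inj (g : {C : pset | convex C} -> {S : pset | drawable S}) : ~ injective g.
Proof.
  intros Hg. apply (cantor_R (fun P => Fd (g (convS P)))).
  intros P Q E. apply Fd_inj, Hg, convS_inj in E. exact E.
Qed.

Theorem corollary2p3 :
  card_lt {S : pset | drawable S} {C : pset | convex C} /\
  (exists C : pset, convex C /\ ~ drawable C).
Proof.
  split; [split|].
  - exists (fun S => convS (fun r => r = Fd S)).
    intros S1 S2 E. apply convS_inj in E. apply Fd_inj.
    pose proof (equal_f E (Fd S1)). simpl in H. rewrite <- H. reflexivity.
  - intros [g Hg]. exact (no_inj g Hg).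
  - apply NNPP. intros N.
    assert (Hall : forall C, convex C -> drawable C).
    { intros C HC. apply NNPP. intros ND. apply N. eauto. }
    apply (no_inj (fun C => exist _ (proj1_sig C) (Hall _ (proj2_sig C)))).
    intros [C1 H1] [C2 H2] E. apply (f_equal (@proj1_sig _ _)) in E. simpl in E. subst.
    apply subset_eq_compat. reflexivity.
Qed.
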